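(* Let $p$ be a prime, $n$ a non-negative integer and $A_*$ a graded commutative algebra over $\mathbb F_p$. Then $\Gamma_{n+1}(G_{p,n}(A_* ))=\{X\}$, i.e. the lower central series $G_{p,n}(A_* )\supset\Gamma_1(G_{p,n}(A_* ))\supset\cdots\supset\Gamma_{n+1}(G_{p,n}(A_* ))$ terminates in the trivial group. If $p$ is odd, then moreover $\Gamma_{n}(G_{p,n}^{ev}(A_* ))=\{X\}$.
   Context: Graded commutative means $ab=(-1)^{\deg a\deg b}ba$. If $p=2$, $G_2(A_* )$ is the set of power series $\alpha(X)=\sum_{i\ge0}\alpha_iX^{2^i}\in A_*[[X]]$ ($X$ of degree $-1$) with $\alpha_i\in A_{2^i-1}$ and $\alpha_0=1$. If $p$ is odd, let $\epsilon$ have degree $-1$ with $\epsilon^2=0$, $X$ degree $-2$, and $G_p(A_* )$ is the set of $\alpha(X)=\sum_{i\ge0}\alpha_iX^{p^i}\in (A_*\otimes_{\mathbb F_p}\mathbb F_p[\epsilon]/(\epsilon^2))[[X]]$ with $\alpha_i$ homogeneous of degree $2(p^i-1)$ and $\alpha_0-1\in(\epsilon)$; $G_p^{ev}(A_* )$ is the subgroup of those $\alpha$ with all $\alpha_i\in A_*$ and $\alpha_0=1$. The group law is $\alpha(X)\cdot\beta(X)=\beta(\alpha(X))$ (coefficient of $X^{p^i}$ equal to $\sum_{j=0}^i\alpha_{i-j}^{p^j}\beta_j$); the identity is $X$. $G_{p,n}(A_* )$ is the subgroup of $G_p(A_* )$ consisting of $\alpha(X)=\sum_i\alpha_iX^{p^i}$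 with $\alpha_i^{p^{n-i+1}}=0$ for $i=1,\dots,n$ and $\alpha_i=0$ for $i\ge n+1$, and for odd $p$, $G_{p,n}^{ev}(A_* )=G_{p,n}(A_* )\cap G_p^{ev}(A_* )$. For a group $G$, $\Gamma_0(G)=G$ and $\Gamma_{k+1}(G)=[\Gamma_k(G),G]$. *)

(* Defs.v *)
From mathcomp Require Import all_boot all_algebra.

Set Implicit Arguments.
Unset Strict Implicit.
Unset Printing Implicit Defensive.

Import GRing.Theory.
Local Open Scope ring_scope.

(* An F_p-algebra is a ring R with p \in [pchar R] (its F_p-vector space     *)
(* structure is then forced).  The grading A_* = (+)_{d >= 0} A_d is given   *)
(* by predicates Ad d (the homogeneous elements of degree d).                *)
Record graded_comm_alg (p : nat) (R : pzRingType) (Ad : nat -> R -> Prop) :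
    Prop := GradedCommAlg {
  gca_char : (p%:R : R) = 0;
  gca_zero : forall d, Ad d 0;
  gca_sub : forall d x y, Ad d x -> Ad d y -> Ad d (x - y);
  gca_one : Ad 0%N 1;
  gca_mul : forall d e x y, Ad d x -> Ad e y -> Ad (d + e)%N (x * y);
  gca_span : forall x, exists (m : nat) (f : nat -> R),
      (forall d, Ad d (f d)) /\ x = \sum_(d < m) f d;
  gca_direct : forall (m : nat) (f : nat -> R),
      (forall d, Ad d (f d)) -> \sum_(d < m) f d = 0 ->
      forall d, (d < m)%N -> f d = 0;
  gca_comm : forall d e x y, Ad d x -> Ad e y ->
      x * y = (-1) ^+ (d * e) * (y * x)
}.

Section LowerCentral.
Variables (T : Type) (mul : T -> T -> T) (e : T) (G : T -> Prop).

Inductive gen_subgroup (P : T -> Prop) : T -> Prop :=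
  | gen_base x : P x -> gen_subgroup P x
  | gen_one : gen_subgroup P e
  | gen_mul x y : gen_subgroup P x -> gen_subgroup P y ->
      gen_subgroup P (mul x y)
  | gen_inv x y : gen_subgroup P x -> G y -> mul x y = e ->
      gen_subgroup P y.

Definition commutator_set (H K : T -> Prop) (c : T) : Prop :=
  exists x y, [/\ H x, K y, G c & mul x y = mul (mul y x) c].

Fixpoint lcs (k : nat) : T -> Prop :=
  match k with
  | 0 => G
  | k'.+1 => gen_subgroup (commutator_set (lcs k') G)
  end.

End LowerCentral.

(* p = 2 : G_2(A_* ) as sequences (alpha_i)_i, alpha(X) = sum alpha_i X^(2^i) *)
Section PowerSeries.
Variable R : pzRingType.

(* coefficient of X^(p^i) of alpha . beta = beta(alpha(X)) *)
Definition ps_mul (p : nat) (a b : nat -> R) : nat -> R :=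
  fun i => \sum_(j < i.+1) (a (i - j)%N) ^+ (p ^ j) * b j.

Definition ps_X : nat -> R := fun i => if i == 0%N then 1 else 0.

Definition in_G2 (Ad : nat -> R -> Prop) (a : nat -> R) : Prop :=
  a 0%N = 1 /\ forall i, Ad (2 ^ i - 1)%N (a i).

Definition in_G2n (Ad : nat -> R -> Prop) (n : nat) (a : nat -> R) : Prop :=
  [/\ in_G2 Ad a,
      forall i, (1 <= i <= n)%N -> (a i) ^+ (2 ^ (n - i + 1)) = 0
    & forall i, (n + 1 <= i)%N -> a i = 0].

(* p odd : coefficients in A_* (x) F_p[eps]/(eps^2); the pair (a, b) stands  *)
(* for a + eps b.  All coefficients occurring are homogeneous of even total  *)
(* degree, so a is of even degree and the (graded) product is                *)
(*   (a + eps b)(c + eps d) = ac + eps (bc + ad).                            *)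
Definition eps_mul (x y : R * R) : R * R :=
  (x.1 * y.1, x.2 * y.1 + x.1 * y.2).

Definition eps_one : R * R := (1, 0).

Definition eps_exp (x : R * R) (k : nat) : R * R := iter k (eps_mul x) eps_one.

Definition eps_zero : R * R := (0, 0).

Definition pse_mul (p : nat) (a b : nat -> R * R) : nat -> R * R :=
  fun i =>
    (\sum_(j < i.+1) (eps_mul (eps_exp (a (i - j)%N) (p ^ j)) (b j)).1,
     \sum_(j < i.+1) (eps_mul (eps_exp (a (i - j)%N) (p ^ j)) (b j)).2).

Definition pse_X : nat -> R * R := fun i => if i == 0%N then eps_one else eps_zero.

(* alpha_i = a_i + eps b_i homogeneous of degree 2(p^i - 1), with eps of     *)
(* degree -1 : a_i in A_{2(p^i-1)}, b_i in A_{2(p^i-1)+1};                   *)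
(* alpha_0 - 1 in (eps) : a_0 = 1.                                          *)
Definition in_Gp (p : nat) (Ad : nat -> R -> Prop) (a : nat -> R * R) : Prop :=
  [/\ (a 0%N).1 = 1,
      forall i, Ad (2 * (p ^ i - 1))%N (a i).1
    & forall i, Ad (2 * (p ^ i - 1) + 1)%N (a i).2].

Definition in_Gpn (p : nat) (Ad : nat -> R -> Prop) (n : nat) (a : nat -> R * R)
    : Prop :=
  [/\ in_Gp p Ad a,
      forall i, (1 <= i <= n)%N -> eps_exp (a i) (p ^ (n - i + 1)) = eps_zero
    & forall i, (n + 1 <= i)%N -> a i = eps_zero].

Definition in_Gpn_ev (p : nat) (Ad : nat -> R -> Prop) (n : nat)
    (a : nat -> R * R) : Prop :=
  [/\ in_Gpn p Ad n a, a 0%N = eps_one & forall i, (a i).2 = 0].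

End PowerSeries.

(* Main.v *)
Require Import Defs.
From mathcomp Require Import all_boot all_algebra.
From Stdlib Require Import FunctionalExtensionality.
From mathcomp Require Import zify.
Set Implicit Arguments. Unset Strict Implicit. Unset Printing Implicit Defensive.
Import GRing.Theory.
Local Open Scope ring_scope.

Section Gen.
Variables (T : Type) (mul : T -> T -> T) (e : T) (G : T -> Prop).

Lemma lcs_sub (S : nat -> T -> Prop) :
  (forall x, G x -> S 0%N x) ->
  (forall k, S k.+1 e) ->
  (forall k x y, S k.+1 x -> S k.+1 y -> S k.+1 (mul x y)) ->
  (forall k x y, S k.+1 x -> G y -> mul x y = e -> S k.+1 y) ->
  (forall k x y c, S k x -> G y -> G c -> mul x y = mul (mul y x) c -> S k.+1 c) ->
  forall k x, lcs mul e G k x -> S k x.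
Proof.
move=> H0 He Hm Hi Hc; elim=> [|k IH] x /=; first exact: H0.
elim=> {x} [c [a [b [Ha Gb Gc Eab]]]| |x y _ Sx _ Sy|x y _ Sx Gy Exy].
- exact: Hc (IH _ Ha) Gb Gc Eab.
- exact: He.
- exact: Hm.
- exact: Hi Sx Gy Exy.
Qed.

Lemma lcs_triv (S : nat -> T -> Prop) k :
  (forall x, lcs mul e G k x -> S k x) ->
  (forall x y c, S k x -> G y -> G c -> mul x y = mul (mul y x) c -> c = e) ->
  (forall y, mul e y = y) ->
  forall x, lcs mul e G k.+1 x -> x = e.
Proof.
move=> HS Hc He1 x /=.
elim=> {x} [c [a [b [Ha Gb Gc Eab]]]| |x y _ -> _ ->|x y _ -> Gy Exy].
- exact: Hc (HS _ Ha) Gb Gc Eab.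
- by [].
- exact: He1.
- by rewrite -Exy He1.
Qed.
End Gen.

Section Scalar.
Variable R : pzRingType.
Implicit Types a b u v c x y : nat -> R.

Lemma bump0 i : bump 0 i = i.+1. Proof. by rewrite /bump leq0n. Qed.

Lemma ps_mul0 q a b : ps_mul q a b 0 = a 0%N * b 0%N.
Proof. by rewrite /ps_mul big_ord1 /= subn0 expn0 expr1. Qed.

Lemma ps_mul_ends q a b i :
  (forall j, (0 < j < i.+1)%N -> a (i.+1 - j)%N ^+ (q ^ j) * b j = 0) ->
  ps_mul q a b i.+1 = a i.+1 * b 0%N + a 0%N ^+ (q ^ i.+1) * b i.+1.
Proof.
move=> H; rewrite /ps_mul big_ord_recl big_ord_recr /= big1 ?addr0.
  by rewrite bump0 subn0 expn0 expr1 subnn add0r.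
by move=> j _; rewrite bump0; apply: H; rewrite /= ltnS ltn_ord.
Qed.

Definition W2 (k : nat) (a : nat -> R) := a 0%N = 1 /\ forall i, (0 < i < k)%N -> a i = 0.

Lemma expr0p (n : nat) : (0 < n)%N -> (0 : R) ^+ n = 0.
Proof. by case: n => // n _; rewrite exprS mul0r. Qed.

Lemma ps_mulX q b : (0 < q)%N -> ps_mul q (ps_X R) b = b.
Proof.
move=> q0; apply: functional_extensionality => i; case: i => [|i].
  by rewrite ps_mul0 /ps_X /= mul1r.
rewrite ps_mul_ends /ps_X /= ?mul0r ?expr1n ?mul1r ?add0r // => j /andP [j0 ji].
have -> : (i.+1 - j == 0)%N = false by apply/negbTE; lia.
by rewrite expr0p ?mul0r // expn_gt0 q0.
Qed.

Lemma ps_mulW_l q k x y i : (0 < q)%N -> W2 k x -> y 0%N = 1 ->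
  (0 < i <= k)%N -> ps_mul q x y i = x i + y i.
Proof.
move=> q0 [x0 xz] y0; case: i => // i /andP [_ ik].
rewrite ps_mul_ends ?y0 ?mulr1 ?x0 ?expr1n ?mul1r // => j /andP [j0 ji].
by rewrite xz ?expr0p ?mul0r ?expn_gt0 ?q0 //; apply/andP; split; lia.
Qed.

Lemma ps_mulW_r q k x y i : W2 k x -> y 0%N = 1 ->
  (0 < i <= k)%N -> ps_mul q y x i = y i + x i.
Proof.
move=> [x0 xz] y0; case: i => // i /andP [_ ik].
rewrite ps_mul_ends ?x0 ?mulr1 ?y0 ?expr1n ?mul1r // => j /andP [j0 ji].
by rewrite xz ?mulr0 //; apply/andP; split; lia.
Qed.

Lemma ps_solve q m u v c : u 0%N = 1 -> v 0%N = 1 ->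
  (forall i, (0 < i < m)%N -> u i = v i) -> ps_mul q u c = v -> W2 m c.
Proof.
move=> u0 v0 uv E.
have c0 : c 0%N = 1 by rewrite -v0 -E ps_mul0 u0 mul1r.
split=> //; elim/ltn_ind => i IH /andP [i0 im].
case: i i0 IH im => // i _ IH im.
have := congr1 (fun f => f i.+1) E.
rewrite ps_mul_ends ?c0 ?mulr1 ?u0 ?expr1n ?mul1r -?uv //.
  by move/(f_equal (fun t => t - u i.+1)); rewrite addrAC subrr add0r.
move=> j /andP [j0 ji]; rewrite IH ?mulr0 //; apply/andP; split; lia.
Qed.

Lemma W2_mul q k x y : (0 < q)%N -> W2 k x -> W2 k y -> W2 k (ps_mul q x y).
Proof.
move=> q0 Wx Wy; have [x0 xz] := Wx; have [y0 yz] := Wy.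
split; first by rewrite ps_mul0 x0 y0 mul1r.
move=> i /andP [i0 ik]; have h : (0 < i < k)%N by rewrite i0 ik.
rewrite (ps_mulW_l q0 Wx y0); last by rewrite i0 ltnW.
by rewrite xz // yz // addr0.
Qed.

Lemma W2_inv q k x y : W2 k x -> ps_mul q x y = ps_X R -> W2 k y.
Proof.
move=> [x0 xz] E; apply: (ps_solve x0 _ _ E) => //.
move=> i /andP [i0 ik]; have h : (0 < i < k)%N by rewrite i0 ik.
by rewrite xz // /ps_X; case: i i0 {ik h}.
Qed.

Lemma W2_comm q k x y c : (0 < q)%N -> W2 k x -> y 0%N = 1 ->
  ps_mul q x y = ps_mul q (ps_mul q y x) c -> W2 k.+1 c.
Proof.
move=> q0 Wx y0 E; have [x0 _] := Wx.
apply: (ps_solve _ _ _ (esym E)); rewrite ?ps_mul0 ?x0 ?y0 ?mul1r //.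
move=> i /andP [i0 ik].
have h : (0 < i <= k)%N by rewrite i0 -ltnS.
by rewrite (ps_mulW_l q0 Wx y0 h) (ps_mulW_r q Wx y0 h) addrC.
Qed.

End Scalar.

Lemma part2 (R : pzRingType) (Ad : nat -> R -> Prop) n a :
  lcs (ps_mul 2) (ps_X R) (in_G2n Ad n) n.+1 a <-> a = ps_X R.
Proof.
split; last by move=> ->; exact: (gen_one _ _ _ _).

apply: (@lcs_triv _ (ps_mul 2) (ps_X R) (in_G2n Ad n) (fun k => @W2 R k.+1) n).
- apply: (@lcs_sub _ _ _ _ (fun k => @W2 R k.+1)).
  + by move=> x [[x0 _] _ _]; split=> // i /andP [i0 i1]; exfalso; lia.
  + by move=> k; split=> // i /andP[i0 _]; rewrite /ps_X; case: i i0.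
  + by move=> k x y; apply: W2_mul.
  + by move=> k x y Wx _; apply: W2_inv.
  + by move=> k x y c Wx [[y0 _] _ _] _ E; apply: W2_comm Wx y0 E.
- move=> x y c Wx [[y0 _] _ _] Gc E.
  have [c0 cz] := W2_comm (isT : (0 < 2)%N) Wx y0 E.
  case: Gc => _ _ cn.
  apply: functional_extensionality => i; rewrite /ps_X; case: i => [|i] //=.
  case: (ltnP i n) => h; [apply: cz | apply: cn]; lia.
- by move=> y; apply: ps_mulX.
Qed.

Section Pair.
Variable R : pzRingType.
Implicit Types x y : R * R.
Implicit Types a b u v c : nat -> R * R.

Definition padd x y : R * R := (x.1 + y.1, x.2 + y.2).

Definition WE (k : nat) a :=
  a 0%N = eps_one R /\ forall i, (0 < i < k)%N -> a i = eps_zero R.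

Definition VV (k : nat) a :=
  match k with
  | 0 => (a 0%N).1 = 1
  | k'.+1 => WE k a /\ (a k).1 = 0
  end.

Definition fsts a : nat -> R := fun j => (a j).1.

Lemma eps_mul1l y : eps_mul (eps_one R) y = y.
Proof. by case: y => a b; rewrite /eps_mul /eps_one /= !mul1r mul0r add0r. Qed.

Lemma eps_mul1r y : eps_mul y (eps_one R) = y.
Proof. by case: y => a b; rewrite /eps_mul /eps_one /= !mulr1 mulr0 addr0. Qed.

Lemma eps_mul0l y : eps_mul (eps_zero R) y = eps_zero R.
Proof. by case: y => a b; rewrite /eps_mul /eps_zero /= !mul0r addr0. Qed.

Lemma eps_mul0r y : eps_mul y (eps_zero R) = eps_zero R.
Proof. by case: y => a b; rewrite /eps_mul /eps_zero /= !mulr0 addr0. Qed.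

Lemma eps_exp1 x : eps_exp x 1 = x.
Proof. by rewrite /eps_exp /= eps_mul1r. Qed.

Lemma eps_exp_fst x m : (eps_exp x m).1 = x.1 ^+ m.
Proof.
elim: m => [|m IH]; first by rewrite expr0.
by rewrite /eps_exp iterS -/(eps_exp x m) /eps_mul /= IH exprS.
Qed.

Lemma eps_exp0 m : (0 < m)%N -> eps_exp (eps_zero R) m = eps_zero R.
Proof. by case: m => // m _; rewrite /eps_exp iterS eps_mul0l. Qed.

Lemma eps_exp_one m : eps_exp (eps_one R) m = eps_one R.
Proof. by elim: m => // m IH; rewrite /eps_exp iterS -/(eps_exp _ m) IH eps_mul1l. Qed.

Lemma eps_exp_1b (e : R) m : eps_exp (1, e) m = (1, e *+ m).
Proof.
elim: m => [|m IH]; first by rewrite mulr0n.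
by rewrite /eps_exp iterS -/(eps_exp _ m) IH /eps_mul /= !mul1r !mulr1 mulrS.
Qed.

Lemma eps_exp_unit p x j : (p%:R : R) = 0 -> x.1 = 1 -> (0 < j)%N ->
  eps_exp x (p ^ j) = eps_one R.
Proof.
move=> Hp; case: x => a e /= ->; case: j => // j _.
by rewrite eps_exp_1b expnS mulnC mulrnA -mulr_natr Hp mulr0.
Qed.

Lemma padd_eqK x y : padd x y = x -> y = eps_zero R.
Proof.
case: x => a b; case: y => c d; rewrite /padd /= => [[h1 h2]].
have e1 : c = 0 by move/(f_equal (fun t => t - a)): h1; rewrite addrAC subrr add0r.
have e2 : d = 0 by move/(f_equal (fun t => t - b)): h2; rewrite addrAC subrr add0r.
by rewrite e1 e2.
Qed.

Lemma paddC x y : padd x y = padd y x.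
Proof. by rewrite /padd addrC [x.2 + _]addrC. Qed.

Lemma eps_mul_solve x (c : R * R) : x.1 = 1 -> eps_mul x c = x -> c = eps_one R.
Proof.
case: x => a e /= ->; case: c => c1 c2; rewrite /eps_mul /= !mul1r => [[-> ]].
rewrite mulr1 => /(f_equal (fun t => t - e)); rewrite addrAC subrr add0r => ->.
by [].
Qed.

Lemma eps_mul_nil x y : x.1 = 0 -> y.1 = 1 -> eps_mul x y = x.
Proof.
by case: x => a b; case: y => c d /= -> ->; rewrite /eps_mul /= mul0r mulr1 mul0r addr0.
Qed.

Lemma eps_mul_comm1 x y : x.1 = 1 -> y.1 = 1 -> eps_mul x y = eps_mul y x.
Proof.
by case: x => a b; case: y => c d /= -> ->; rewrite /eps_mul /= !mulr1 !mul1r addrC.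
Qed.

End Pair.

Section Pair2.
Variable R : pzRingType.
Implicit Types x y a b u v c : nat -> R * R.
Lemma pse_mul0 p a b : pse_mul p a b 0 = eps_mul (a 0%N) (b 0%N).
Proof.
by rewrite /pse_mul !big_ord1 subn0 expn0 eps_exp1; case: eps_mul.
Qed.

Lemma pse_mul_ends p a b i :
  (forall j, (0 < j < i.+1)%N ->
     eps_mul (eps_exp (a (i.+1 - j)%N) (p ^ j)) (b j) = eps_zero R) ->
  pse_mul p a b i.+1 = padd (eps_mul (a i.+1) (b 0%N))
                            (eps_mul (eps_exp (a 0%N) (p ^ i.+1)) (b i.+1)).
Proof.
move=> H; rewrite /pse_mul big_ord_recl big_ord_recr big_ord_recl big_ord_recr.
rewrite big1; last by move=> j _; rewrite H // lift0 /= ltnS ltn_ord.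
rewrite big1; last by move=> j _; rewrite H // lift0 /= ltnS ltn_ord.
by rewrite /padd !lift0 !subn0 !expn0 !eps_exp1 !subnn !Monoid.mul1m.
Qed.

Lemma pse_mul_fst p a b i :
  (pse_mul p a b i).1 = ps_mul p (fsts a) (fsts b) i.
Proof. by rewrite /pse_mul /ps_mul /=; apply: eq_bigr => j _; rewrite eps_exp_fst. Qed.

Lemma fsts_pse_mul p a b : fsts (pse_mul p a b) = ps_mul p (fsts a) (fsts b).
Proof. by apply: functional_extensionality => i; rewrite /fsts pse_mul_fst. Qed.

Lemma pse_mulX p b : (0 < p)%N -> pse_mul p (pse_X R) b = b.
Proof.
move=> p0; apply: functional_extensionality => i; case: i => [|i].
  by rewrite pse_mul0 /pse_X /= eps_mul1l.
rewrite pse_mul_ends /pse_X /= ?eps_mul0l ?eps_exp_one ?eps_mul1l.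
  by rewrite /padd /=; case: (b i.+1) => c d /=; rewrite !add0r.
move=> j /andP [j0 ji].
have -> : (i.+1 - j == 0)%N = false by apply/negbTE; lia.
by rewrite eps_exp0 ?eps_mul0l // expn_gt0 p0.
Qed.

Lemma pse_mulW_l p k x y i : (0 < p)%N -> WE k x ->
  (forall i, (0 < i <= k)%N -> eps_mul (x i) (y 0%N) = x i) ->
  (0 < i <= k)%N -> pse_mul p x y i = padd (x i) (y i).
Proof.
move=> p0 [x0 xz] Hy; case: i => // i /andP [_ ik].
rewrite pse_mul_ends ?Hy ?x0 ?eps_exp_one ?eps_mul1l // => j /andP [j0 ji].
rewrite xz ?eps_exp0 ?eps_mul0l ?expn_gt0 ?p0 //; apply/andP; split; lia.
Qed.

Lemma pse_mulW_r p k x y i : (p%:R : R) = 0 -> WE k x -> (y 0%N).1 = 1 ->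
  (0 < i <= k)%N -> pse_mul p y x i = padd (y i) (x i).
Proof.
move=> Hp [x0 xz] y0; case: i => // i /andP [_ ik].
rewrite pse_mul_ends ?x0 ?eps_mul1r ?(eps_exp_unit Hp y0 (ltn0Sn i)) ?eps_mul1l //.
move=> j /andP [j0 ji]; rewrite xz ?eps_mul0r //; apply/andP; split; lia.
Qed.

Lemma pse_solve p m u v c : (p%:R : R) = 0 -> (u 0%N).1 = 1 -> u 0%N = v 0%N ->
  (forall i, (0 < i < m)%N -> u i = v i) -> pse_mul p u c = v -> WE m c.
Proof.
move=> Hp u01 uv0 uv E.
have c0 : c 0%N = eps_one R.
  by apply: (eps_mul_solve u01); rewrite -(pse_mul0 p) E uv0.
split=> //; elim/ltn_ind => i IH /andP [i0 im].
case: i i0 IH im => // i _ IH im.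
have := congr1 (fun f => f i.+1) E.
rewrite pse_mul_ends ?c0 ?eps_mul1r ?(eps_exp_unit Hp u01 (ltn0Sn i)) ?eps_mul1l -?uv //.
  exact: padd_eqK.
move=> j /andP [j0 ji]; rewrite IH ?eps_mul0r //; apply/andP; split; lia.
Qed.

Lemma WE_mul p k x y : (0 < p)%N -> WE k x -> WE k y -> WE k (pse_mul p x y).
Proof.
move=> p0 Wx Wy; have [x0 xz] := Wx; have [y0 yz] := Wy.
split; first by rewrite pse_mul0 x0 y0 eps_mul1l.
move=> i /andP [i0 ik]; have h : (0 < i < k)%N by rewrite i0 ik.
rewrite (pse_mulW_l p0 Wx); first by rewrite xz // yz // /padd /= !addr0.
- by move=> j _; rewrite y0 eps_mul1r.
- by rewrite i0 ltnW.
Qed.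

Lemma WE_inv p k x y : (p%:R : R) = 0 -> WE k x -> pse_mul p x y = pse_X R -> WE k y.
Proof.
move=> Hp [x0 xz] E; apply: (pse_solve Hp _ _ _ E); rewrite ?x0 //.
move=> i /andP [i0 ik]; have h : (0 < i < k)%N by rewrite i0 ik.
by rewrite xz // /pse_X; case: i i0 {ik h}.
Qed.

Lemma WE_comm p k x y c : (0 < p)%N -> (p%:R : R) = 0 -> WE k x -> (y 0%N).1 = 1 ->
  (forall i, (0 < i <= k)%N -> eps_mul (x i) (y 0%N) = x i) ->
  pse_mul p x y = pse_mul p (pse_mul p y x) c -> WE k.+1 c.
Proof.
move=> p0 Hp Wx y0 Hy E; have [x0 _] := Wx.
apply: (pse_solve Hp _ _ _ (esym E)); rewrite ?pse_mul0 ?x0 ?eps_mul1r ?eps_mul1l //.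
move=> i /andP [i0 ik].
have h : (0 < i <= k)%N by rewrite i0 -ltnS.
by rewrite (pse_mulW_l p0 Wx Hy h) (pse_mulW_r Hp Wx y0 h) paddC.
Qed.

Lemma VV_W2 k x : VV k x -> W2 k.+1 (fsts x).
Proof.
case: k => [|k] /=; first by move=> h; split=> // i /andP [i0 i1]; exfalso; lia.
move=> [[x0 xz] xk]; split; first by rewrite /fsts x0.
move=> i /andP [i0 ik]; rewrite /fsts; case: (ltnP i k.+1) => h.
  by rewrite xz // i0.
by have -> : i = k.+1 by lia.
Qed.

Lemma VV_mul p k x y : (0 < p)%N -> VV k.+1 x -> VV k.+1 y -> VV k.+1 (pse_mul p x y).
Proof.
move=> p0 Vx Vy; have Wx2 := VV_W2 Vx; have Wy2 := VV_W2 Vy.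
have [Wx xk] := Vx; have [Wy yk] := Vy.
split; first exact: WE_mul.
rewrite pse_mul_fst (ps_mulW_l p0 Wx2); first by rewrite /fsts xk yk addr0.
  by case: Wy2.
by rewrite /=.
Qed.

Lemma VV_inv p k x y : (p%:R : R) = 0 -> VV k.+1 x -> pse_mul p x y = pse_X R ->
  VV k.+1 y.
Proof.
move=> Hp Vx E; have [x01 xz] := VV_W2 Vx; have [Wx _] := Vx.
split; first exact: WE_inv Wx E.
have E' : ps_mul p (fsts x) (fsts y) = fsts (pse_X R) by rewrite -fsts_pse_mul E.
have uv : forall i, (0 < i < k.+2)%N -> fsts x i = fsts (pse_X R) i.
  move=> i /andP [i0 ik]; rewrite xz; last by rewrite i0 ik.
  by rewrite /fsts /pse_X; case: i i0 {ik}.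
have v0 : fsts (pse_X R) 0%N = 1 by [].
have [_ yz] := ps_solve x01 v0 uv E'.
by apply: yz; rewrite /= ltnSn.
Qed.

Lemma VV_comm p k x y c : (0 < p)%N -> (p%:R : R) = 0 -> VV k x -> (y 0%N).1 = 1 ->
  pse_mul p x y = pse_mul p (pse_mul p y x) c -> VV k.+1 c.
Proof.
move=> p0 Hp Vx y0 E; have Wx2 := VV_W2 Vx; have [x01 _] := Wx2.
split.
  case: k Vx Wx2 => [|k] Vx Wx2.
    apply: (pse_solve Hp _ _ _ (esym E)); rewrite ?pse_mul0 //.
    - by rewrite /eps_mul /= y0 Vx mulr1.
    - by rewrite (eps_mul_comm1 y0 Vx).
    - by move=> i /andP [i0 i1]; exfalso; lia.
  have [Wx xk] := Vx; apply: (WE_comm p0 Hp Wx y0 _ E).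
  move=> i /andP [i0 ik]; case: (ltnP i k.+1) => h.
    by have [_ xz] := Wx; rewrite xz ?i0 // eps_mul0l.
  have -> : i = k.+1 by lia.
  exact: eps_mul_nil.
have E' : ps_mul p (fsts x) (fsts y) =
          ps_mul p (ps_mul p (fsts y) (fsts x)) (fsts c).
  by rewrite -!fsts_pse_mul E.
have u0 : ps_mul p (fsts y) (fsts x) 0%N = 1.
  by rewrite ps_mul0 x01 mulr1.
have v0 : ps_mul p (fsts x) (fsts y) 0%N = 1.
  by rewrite ps_mul0 x01 mul1r.
have uv : forall i, (0 < i < k.+2)%N ->
    ps_mul p (fsts y) (fsts x) i = ps_mul p (fsts x) (fsts y) i.
  move=> i /andP [i0 ik]; have h : (0 < i <= k.+1)%N by rewrite i0 -ltnS.
  by rewrite (ps_mulW_l p0 Wx2 y0 h) (ps_mulW_r p Wx2 y0 h) addrC.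
have [_ cz] := ps_solve u0 v0 uv (esym E').
by apply: cz; rewrite /= ltnSn.
Qed.

End Pair2.

Lemma partodd (R : pzRingType) (Ad : nat -> R -> Prop) n p :
  prime p -> graded_comm_alg p Ad -> forall a,
  lcs (pse_mul p) (pse_X R) (in_Gpn p Ad n) n.+1 a <-> a = pse_X R.
Proof.
move=> pp gca a; have p0 := prime_gt0 pp; have Hp := gca_char gca.
split; last by move=> ->; exact: (gen_one _ _ _ _).
apply: (@lcs_triv _ (pse_mul p) (pse_X R) (in_Gpn p Ad n) (fun k => @VV R k) n).
- apply: (@lcs_sub _ _ _ _ (fun k => @VV R k)).
  + by move=> x [[x0 _ _] _ _].
  + move=> k; split; last by rewrite /pse_X.
    by split=> // i /andP [i0 _]; rewrite /pse_X; case: i i0.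
  + by move=> k x y; apply: VV_mul.
  + by move=> k x y Vx _; apply: VV_inv.
  + by move=> k x y c Vx [[y0 _ _] _ _] _ E; apply: VV_comm p0 Hp Vx y0 E.
- move=> x y c Vx [[y0 _ _] _ _] Gc E.
  have [[c0 cz] _] := VV_comm p0 Hp Vx y0 E.
  case: Gc => _ _ cn.
  apply: functional_extensionality => i; rewrite /pse_X; case: i => [|i] //=.
  case: (ltnP i n) => h; [apply: cz | apply: cn]; lia.
- by move=> y; apply: pse_mulX.
Qed.

Lemma partev (R : pzRingType) (Ad : nat -> R -> Prop) n p :
  prime p -> graded_comm_alg p Ad -> forall a,
  lcs (pse_mul p) (pse_X R) (in_Gpn_ev p Ad n) n a <-> a = pse_X R.
Proof.
move=> pp gca a; have p0 := prime_gt0 pp; have Hp := gca_char gca.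
case: n => [|n].
  split.
    move=> [[_ _ an] a0 _]; apply: functional_extensionality => i.
    by case: i => [|i] //; rewrite /pse_X /=; apply: an; lia.
  move=> ->; split; last by move=> i; rewrite /pse_X; case: (i == 0%N).
    2: by [].
  split.
  - split.
    + by [].
    + move=> i; case: i => [|i] /=.
        rewrite expn0 subnn muln0; exact: (gca_one gca).
      exact: (gca_zero gca).
    + by move=> i; rewrite /pse_X; case: (i == 0%N); exact: (gca_zero gca).
  - by move=> i /andP [h1 h2]; exfalso; lia.
  - by move=> i h; rewrite /pse_X; case: i h.
split; last by move=> ->; exact: (gen_one _ _ _ _).
apply: (@lcs_triv _ (pse_mul p) (pse_X R) (in_Gpn_ev p Ad n.+1)
          (fun k => @WE R k.+1) n).
- apply: (@lcs_sub _ _ _ _ (fun k => @WE R k.+1)).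
  + by move=> x [_ x0 _]; split=> // i /andP [i0 i1]; exfalso; lia.
  + by move=> k; split=> // i /andP [i0 _]; rewrite /pse_X; case: i i0.
  + by move=> k x y; apply: WE_mul.
  + by move=> k x y Vx _; apply: WE_inv.
  + move=> k x y c Wx [_ y0 _] _ E; apply: (WE_comm p0 Hp Wx _ _ E).
      by rewrite y0.
    by move=> i _; rewrite y0 eps_mul1r.
- move=> x y c Wx [_ y0 _] [[_ _ cn] _ _] E.
  have y01 : (y 0%N).1 = 1 by rewrite y0.
  have Hy : forall i, (0 < i <= n.+1)%N -> eps_mul (x i) (y 0%N) = x i.
    by move=> i _; rewrite y0 eps_mul1r.
  have [c0 cz] := WE_comm p0 Hp Wx y01 Hy E.
  apply: functional_extensionality => i; rewrite /pse_X; case: i => [|i] //=.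
  case: (ltnP i n.+1) => h; [apply: cz | apply: cn]; lia.
- by move=> y; apply: pse_mulX.
Qed.

Theorem theorem3p6 (p : nat) (n : nat) (R : pzRingType)
    (Ad : nat -> R -> Prop) :
  prime p -> graded_comm_alg p Ad ->
  (p = 2%N ->
     forall a, lcs (ps_mul 2) (ps_X R) (in_G2n Ad n) n.+1 a <-> a = ps_X R) /\
  (odd p ->
     (forall a, lcs (pse_mul p) (pse_X R) (in_Gpn p Ad n) n.+1 a <-> a = pse_X R)
     /\
     (forall a, lcs (pse_mul p) (pse_X R) (in_Gpn_ev p Ad n) n a <-> a = pse_X R)).
Proof.
move=> pp gca; split.
  by move=> _ a; apply: part2.
by move=> _; split; [apply: partodd | apply: partev].
Qed.
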